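(* Let two players have arbitrary (not necessarily identical) valuations $v_1,v_2$ on a finite set of goods $M$. Let $(A_1,A_2)$ be a leximin++ solution for two players who both have valuation $v_1$. - If $v_2(A_1)\ge v_2(A_2)$, give $A_2$ to player 1 and $A_1$ to player 2. - Otherwise, give $A_1$ to player 1 and $A_2$ to player 2. The resulting allocation is EFX with respect to $(v_1,v_2)$.
   Context: A valuation is a function $v:2^M\to\mathbb{R}_{\ge0}$ with $v(\emptyset)=0$ that is monotone: $v(S)\le v(T)$ whenever $S\subseteq T$. An allocation is an ordered partition $(A_1,\dots,A_n)$ of $M$; parts may be empty. It is EFX if for all players $i,j$ and every $g\in A_j$ we have $v_i(A_i)\ge v_i(A_j\setminus\{g\})$. For an allocation $A$, let $X^A$ be the ordering of the players by increasing utility $v_i(A_i)$, with ties broken by increasing player index. The leximin++ comparison is defined as follows. For allocations $A$ and $B$, scan $\ell=1,\dots,n$, and let $i=X^A_\ell$ and $j=X^B_\ell$. - If $v_i(A_i)\ne v_j(B_j)$, stop: $A\prec_{++}B$ holds if and only if $v_i(A_i)<v_j(B_j)$. - Otherwise, if $|A_i|\ne|B_j|$, stop: $A\prec_{++}B$ holds if and only if $|A_i|<|B_j|$. - Otherwise continue to $\ell+1$. If the scan finishes without stopping, then $A\prec_{++}B$ is false. A leximin++ solution is an allocation $A$ that is maximal for this comparison: there is no allocation $B$ with $A\prec_{++}B$. *)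

(* Defs.v *)
From HB Require Import structures.
From mathcomp Require Import all_boot all_order all_algebra.
Set Implicit Arguments. Unset Strict Implicit. Unset Printing Implicit Defensive.
Import Order.TTheory GRing.Theory Num.Theory.
Local Open Scope ring_scope.

Section Defs.
Variables (R : realFieldType) (M : finType).

Definition is_valuation (v : {set M} -> R) : Prop :=
  [/\ v set0 = 0, (forall S, 0 <= v S) &
      (forall S T : {set M}, S \subset T -> v S <= v T)].

Definition is_allocation (n : nat) (A : 'I_n -> {set M}) : Prop :=
  (forall i j, i != j -> [disjoint A i & A j]) /\
  (\bigcup_(i < n) A i = [set: M]).

Definition EFX (n : nat) (v : 'I_n -> {set M} -> R) (A : 'I_n -> {set M}) : Prop :=
  forall i j : 'I_n, forall g, g \in A j -> v i (A j :\ g) <= v i (A i).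

Definition player_le (n : nat) (v : 'I_n -> {set M} -> R) (A : 'I_n -> {set M})
  (i j : 'I_n) : bool :=
  (v i (A i) < v j (A j)) || ((v i (A i) == v j (A j)) && (i <= j)%N).

Definition X_order (n : nat) (v : 'I_n -> {set M} -> R) (A : 'I_n -> {set M}) :
  seq 'I_n := sort (player_le v A) (enum 'I_n).

Definition lex_keys (n : nat) (v : 'I_n -> {set M} -> R) (A : 'I_n -> {set M}) :
  seq (R * nat) := [seq (v i (A i), #|A i|) | i <- X_order v A].

Fixpoint lex_lt (s t : seq (R * nat)) : bool :=
  match s, t with
  | a :: s', b :: t' =>
      if a.1 != b.1 then a.1 < b.1
      else if a.2 != b.2 then (a.2 < b.2)%N
      else lex_lt s' t'
  | _, _ => false
  end.

Definition leximinpp_lt (n : nat) (v : 'I_n -> {set M} -> R)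
  (A B : 'I_n -> {set M}) : bool := lex_lt (lex_keys v A) (lex_keys v B).

Definition leximinpp_solution (n : nat) (v : 'I_n -> {set M} -> R)
  (A : 'I_n -> {set M}) : Prop :=
  is_allocation A /\ forall B, is_allocation B -> ~~ leximinpp_lt v A B.

End Defs.

(* two-player valuation profile: player 1 = ord0, player 2 = ord1 *)
Definition profile2 (R : realFieldType) (M : finType) (v1 v2 : {set M} -> R)
  : 'I_2 -> {set M} -> R := fun i => if i == ord0 then v1 else v2.

Definition alloc2 (M : finType) (S1 S2 : {set M}) : 'I_2 -> {set M} :=
  fun i => if i == ord0 then S1 else S2.

(* Main.v *)
Require Import Defs.
From HB Require Import structures.
From mathcomp Require Import all_boot all_order all_algebra.
Import Order.TTheory GRing.Theory Num.Theory.
Local Open Scope ring_scope.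

Definition o1 : 'I_2 := @Ordinal 2 1 isT.
Lemma enum2 : enum 'I_2 = [:: ord0; o1].
Proof. by apply: (inj_map val_inj); rewrite val_enum_ord. Qed.

Lemma keys2 (R : realFieldType) (M : finType) (v : {set M} -> R) (X Y : {set M}) :
  lex_keys (profile2 v v) (alloc2 X Y) =
  if v X <= v Y then [:: (v X, #|X|); (v Y, #|Y|)] else [:: (v Y, #|Y|); (v X, #|X|)].
Proof.
rewrite /lex_keys /X_order enum2 /=.
rewrite /player_le /profile2 /alloc2 /=.
rewrite /sort /=.
rewrite andbT orbC -le_eqVlt; by case: ifP.
Qed.

Lemma core (R : realFieldType) (M : finType) (v : {set M} -> R) (X Y : {set M}) g :
  is_valuation v -> g \in Y -> g \notin X -> v X < v (Y :\ g) ->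
  lex_lt (lex_keys (profile2 v v) (alloc2 X Y)) (lex_keys (profile2 v v) (alloc2 (g |: X) (Y :\ g))) /\
  lex_lt (lex_keys (profile2 v v) (alloc2 Y X)) (lex_keys (profile2 v v) (alloc2 (Y :\ g) (g |: X))).
Proof.
case=> _ _ mono gY gX lt.
have ac : v X <= v (g |: X) by apply: mono; apply: subsetUr.
have db : v (Y :\ g) <= v Y by apply: mono; apply: subsetDl.
have ab : v X < v Y by apply: lt_le_trans db.
have cX : #|g |: X| = #|X|.+1 by rewrite cardsU1 gX.
rewrite !keys2 (ltW ab) (leNgt (v Y)) ab /= cX.
move: ac; rewrite le_eqVlt => /orP [/eqP ac | ac];
  split; case: ifP => _ /=;
  rewrite ?(lt_eqF lt) ?lt //; rewrite -?ac ?eqxx /= ?(ltn_eqF (ltnSn _)) ?ltnSn //;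
  by rewrite ?(lt_eqF ac) ?ac.
Qed.

Lemma alloc2P (M : finType) (X Y : {set M}) :
  [disjoint X & Y] -> X :|: Y = setT -> is_allocation (alloc2 X Y).
Proof.
move=> dXY uXY; split.
  move=> [[|[|//]] Hi] [[|[|//]] Hj] //=; rewrite /alloc2 /= => _ //.
  by rewrite disjoint_sym.
by rewrite big_ord_recl big_ord1.
Qed.

Lemma alloc2D (M : finType) (X Y : {set M}) :
  is_allocation (alloc2 X Y) -> [disjoint X & Y] /\ X :|: Y = setT.
Proof.
case=> d u; split; first exact: (d ord0 o1).
by move: u; rewrite big_ord_recl big_ord1.
Qed.

Lemma sol_efx (R : realFieldType) (M : finType) (v : {set M} -> R) (X Y : {set M}) g :
  is_valuation v -> leximinpp_solution (profile2 v v) (alloc2 X Y) ->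
  (g \in Y -> v (Y :\ g) <= v X) /\ (g \in X -> v (X :\ g) <= v Y).
Proof.
move=> hv [/alloc2D [dXY uXY] hmax].
have hd : forall h, h \in X -> h \in Y -> False.
  by move=> h hX hY; move: (disjointFr dXY hX); rewrite hY.
have hu : forall h, (h \in X) || (h \in Y).
  by move=> h; move/setP/(_ h): uXY; rewrite !inE.
have dis : forall g, g \in Y -> g \notin X.
  by move=> h hY; apply/negP => hX; apply: (hd h).
split => hg; rewrite leNgt; apply/negP => lt.
- have [h1 _] := core _ _ _ _ _ _ hv hg (dis _ hg) lt.
  have : is_allocation (alloc2 (g |: X) (Y :\ g)).
    apply: alloc2P.
      rewrite -setI_eq0; apply/eqP/setP => h; rewrite !inE.
      apply/negbTE/negP; case/andP=> /orP [/eqP->|hX] /andP [hne hY].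
        by rewrite eqxx in hne.
      exact: (hd h).
    apply/setP => h; rewrite !inE; case: eqVneq => //= _; exact: hu.
  by move/hmax; rewrite /leximinpp_lt h1.
- have hg' : g \notin Y by apply/negP => hY; apply: (hd g).
  have [_ h2] := core _ _ _ _ _ _ hv hg hg' lt.
  have : is_allocation (alloc2 (X :\ g) (g |: Y)).
    apply: alloc2P.
      rewrite -setI_eq0; apply/eqP/setP => h; rewrite !inE.
      apply/negbTE/negP; case/andP=> /andP [hne hX] /orP [/eqP He|hY].
        by rewrite He eqxx in hne.
      exact: (hd h).
    apply/setP => h; rewrite !inE; case: eqVneq => //= _; exact: hu.
  by move/hmax; rewrite /leximinpp_lt h2.
Qed.

Theorem theorem4p3 (R : realFieldType) (M : finType) (v1 v2 : {set M} -> R)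
  (A1 A2 : {set M}) :
  is_valuation v1 -> is_valuation v2 ->
  leximinpp_solution (profile2 v1 v1) (alloc2 A1 A2) ->
  EFX (profile2 v1 v2)
    (if v2 A2 <= v2 A1 then alloc2 A2 A1 else alloc2 A1 A2).
Proof.
move=> hv1 hv2 hsol.
have hm1 := hv1; case: hm1 => _ _ mono1.
have hm2 := hv2; case: hm2 => _ _ mono2.
have sD : forall (S : {set M}) g, S :\ g \subset S by move=> S g; apply: subsetDl.
have E g := sol_efx _ _ _ _ _ g hv1 hsol.
case: ifP => h21 [[|[|//]] Hi] [[|[|//]] Hj] g;
  rewrite /profile2 /alloc2 /= => hg.
- exact: mono1.
- by case: (E g) => _ /(_ hg).
- exact: le_trans (mono2 _ _ (sD _ _)) h21.
- exact: mono2.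
- exact: mono1.
- by case: (E g) => /(_ hg).
- apply: le_trans (mono2 _ _ (sD _ _)) _; rewrite ltW // ltNge h21.
  by [].
  exact: mono2.

Qed.
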